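(* Let $\tau$ be a point of the upper half plane, and let $Q_1,Q_2\in M_2(\mathbb Z)$ be symmetric positive definite matrices of determinant $N$. Put $H_i=(\operatorname{Im}(Q_i\tau))^{-1}$ and $\mathscr R_i=\{M\in\operatorname{End}(X_{Q_i\tau}):{}^t\bar MH_i=H_iM^\iota\}$ for $i=1,2$. Let $S=\mathbb Z$ or $\mathbb Q$ and suppose there is $A\in GL_2(S)$ with $Q_2=(\det A)^{-1}AQ_1\,{}^tA$. Then $M\mapsto AMA^{-1}$ is an $S$-algebra isomorphism $\operatorname{End}_S(X_{Q_1\tau})\to\operatorname{End}_S(X_{Q_2\tau})$, and it induces an $S$-algebra isomorphism $\mathscr R_1\otimes_{\mathbb Z}S\to\mathscr R_2\otimes_{\mathbb Z}S$.
   Context: For $z$ in the Siegel upper half space $\mathfrak h_2=\{z\in M_2(\mathbb C):{}^tz=z,\operatorname{Im}z>0\}$: $L_z=[z,\mathbf 1_2]\mathbb Z^4\subset\mathbb C^2$, $X_z=\mathbb C^2/L_z$; $\operatorname{End}(X_z)=\operatorname{End}_{\mathbb Z}(X_z)$ is identified with the ring of $M\in M_2(\mathbb C)$ with $ML_z\subseteq L_z$, and $\operatorname{End}_{\mathbb Q}(X_z)=\operatorname{End}(X_z)\otimes\mathbb Q$. For a $2\times2$ matrix $M$, $M^\iota=\operatorname{tr}(M)\mathbf 1_2-M$ and $\bar M$ is entrywise complex conjugation. $N$ is a prime. *)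

(* Defs.v *)
From HB Require Import structures.
From mathcomp Require Import all_boot all_order all_algebra.
Set Implicit Arguments. Unset Strict Implicit. Unset Printing Implicit Defensive.
Import Order.TTheory GRing.Theory Num.Theory.
Local Open Scope ring_scope.

Inductive scal := SZ | SQ.

Definition intmx (R : nzRingType) m n (A : 'M[int]_(m, n)) : 'M[R]_(m, n) :=
  map_mx (fun x : int => x%:~R) A.

Definition ratmx (C : numClosedFieldType) m n (A : 'M[rat]_(m, n)) : 'M[C]_(m, n) :=
  map_mx (fun x : rat => ratr x) A.

(* v lies in the lattice L_z = [z, 1_2] Z^4. *)
Definition in_lattice (C : numClosedFieldType) (z : 'M[C]_2) (v : 'cV[C]_2) : Prop :=
  exists a b : 'cV[int]_2, v = z *m intmx C a + intmx C b.

(* End(X_z) = End_Z(X_z): complex matrices M with M L_z ⊆ L_z. *)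
Definition EndX (C : numClosedFieldType) (z : 'M[C]_2) (M : 'M[C]_2) : Prop :=
  forall v, in_lattice z v -> in_lattice z (M *m v).

(* End_S(X_z); for S = Q, End(X_z) ⊗ Q realised inside M_2(C). *)
Definition EndS (C : numClosedFieldType) (S : scal) (z M : 'M[C]_2) : Prop :=
  match S with
  | SZ => EndX z M
  | SQ => exists n : nat, (0 < n)%N /\ EndX z (n%:R *: M)
  end.

Definition Hmat (C : numClosedFieldType) (z : 'M[C]_2) : 'M[C]_2 :=
  invmx (map_mx (fun x : C => 'Im x) z).

Definition iota_mx (C : numClosedFieldType) (M : 'M[C]_2) : 'M[C]_2 :=
  (\tr M)%:M - M.

Definition Rring (C : numClosedFieldType) (z M : 'M[C]_2) : Prop :=
  EndX z M /\ (map_mx (fun x : C => x^*) M)^T *m Hmat z = Hmat z *m iota_mx M.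

(* R_z ⊗_Z S realised inside M_2(C). *)
Definition RS (C : numClosedFieldType) (S : scal) (z M : 'M[C]_2) : Prop :=
  match S with
  | SZ => Rring z M
  | SQ => exists n : nat, (0 < n)%N /\ Rring z (n%:R *: M)
  end.

Definition GL2 (S : scal) (A : 'M[rat]_2) : Prop :=
  A \in unitmx /\
  (S = SZ -> exists Ai Bi : 'M[int]_2, A = intmx rat Ai /\ invmx A = intmx rat Bi).

Definition posdef (C : numClosedFieldType) (Q : 'M[int]_2) : Prop :=
  Q^T = Q /\
  forall v : 'cV[C]_2, (forall i, v i 0 \is Num.real) -> v != 0 ->
    0 < (v^T *m intmx C Q *m v) 0 0.

Definition is_scalar (S : scal) (c : rat) : Prop :=
  match S with SZ => exists k : int, c = k%:~R | SQ => True end.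

(* Main.v *)
Require Import Defs.
From HB Require Import structures.
From mathcomp Require Import all_boot all_order all_algebra.
Import Order.TTheory GRing.Theory Num.Theory.
Local Open Scope ring_scope.

Lemma ratmx_int (C : numClosedFieldType) m n (X : 'M[int]_(m, n)) :
  ratmx C (intmx rat X) = intmx C X.
Proof. by apply/matrixP => i j; rewrite !mxE ratr_int. Qed.

Lemma intmxM (R : comNzRingType) m n p (X : 'M[int]_(m, n)) (Y : 'M[int]_(n, p)) :
  intmx R (X *m Y) = intmx R X *m intmx R Y.
Proof. by rewrite /intmx map_mxM. Qed.

Lemma ratmxM (C : numClosedFieldType) m n p (X : 'M[rat]_(m, n)) (Y : 'M[rat]_(n, p)) :
  ratmx C (X *m Y) = ratmx C X *m ratmx C Y.
Proof. by rewrite /ratmx map_mxM. Qed.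

Lemma ratmxZ (C : numClosedFieldType) m n c (X : 'M[rat]_(m, n)) :
  ratmx C (c *: X) = ratr c *: ratmx C X.
Proof. by apply/matrixP => i j; rewrite !mxE rmorphM. Qed.

Lemma ratmxT (C : numClosedFieldType) m n (X : 'M[rat]_(m, n)) :
  ratmx C X^T = (ratmx C X)^T.
Proof. by apply/matrixP => i j; rewrite !mxE. Qed.

Lemma ratmxV (C : numClosedFieldType) (X : 'M[rat]_2) :
  ratmx C (invmx X) = invmx (ratmx C X).
Proof. by rewrite /ratmx map_invmx. Qed.

Lemma ratmx_det (C : numClosedFieldType) (X : 'M[rat]_2) :
  \det (ratmx C X) = ratr (\det X).
Proof. by rewrite /ratmx det_map_mx. Qed.

Lemma ratmx_unit (C : numClosedFieldType) (X : 'M[rat]_2) :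
  X \in unitmx -> ratmx C X \in unitmx.
Proof. by rewrite !unitmxE !unitfE ratmx_det fmorph_eq0. Qed.

Lemma lat_map (C : numClosedFieldType) (z z' : 'M[C]_2) (P W : 'M[int]_2) v :
  intmx C P *m z' = z *m intmx C W -> in_lattice z' v -> in_lattice z (intmx C P *m v).
Proof.
move=> E [a [b ->]]; exists (W *m a), (P *m b).
by rewrite mulmxDr mulmxA E !intmxM mulmxA.
Qed.

Lemma End_conj (C : numClosedFieldType) (z1 z2 : 'M[C]_2) (P1 W1 P2 W2 : 'M[int]_2) M :
  intmx C P2 *m z2 = z1 *m intmx C W2 -> intmx C P1 *m z1 = z2 *m intmx C W1 ->
  EndX z1 M -> EndX z2 (intmx C P1 *m M *m intmx C P2).
Proof.
move=> E2 E1 HM v Hv; rewrite -!mulmxA; apply: lat_map E1 _.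
by apply: HM; apply: lat_map E2 Hv.
Qed.

Lemma denom_seq (s : seq rat) : exists d : nat, (0 < d)%N /\
  forall x, x \in s -> exists k : int, d%:R * x = k%:~R.
Proof.
elim: s => [|r s [d [d0 Hd]]]; first by exists 1%N; split => // x; rewrite in_nil.
have hden : (`|denq r|%:R : rat) = (denq r)%:~R.
  by rewrite natr_absz gtr0_norm ?denq_gt0.
exists (d * `|denq r|)%N; split.
  by rewrite muln_gt0 d0 absz_gt0 denq_neq0.
move=> x; rewrite inE => /predU1P [->|xs].
  exists (d%:Z * numq r); rewrite natrM hden -mulrA [_ * r]mulrC -numqE.
  idtac.
  by rewrite intrM.
have [k hk] := Hd x xs; exists (k * `|denq r|%:Z).
by rewrite natrM mulrAC hk intrM.
Qed.

Lemma denom_mx (R : 'M[rat]_2) : exists d : nat, (0 < d)%N /\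
  exists Ri, d%:R *: R = intmx rat Ri.
Proof.
have [d [d0 Hd]] := denom_seq [seq R ij.1 ij.2 | ij <- enum {: 'I_2 * 'I_2}].
exists d; split => //; exists (\matrix_(i, j) numq (d%:R * R i j)).
apply/matrixP => i j; rewrite !mxE.
have [|k hk] := Hd (R i j); first by apply/mapP; exists (i, j); rewrite ?mem_enum.
by rewrite hk numq_int.
Qed.
Definition cmx (C : numClosedFieldType) (M : 'M[C]_2) := map_mx (fun x : C => x^*) M.
Arguments cmx {C}.

Lemma herm_iff (C : numClosedFieldType) (G X Y : 'M[C]_2) : G \in unitmx ->
  (X *m invmx G = invmx G *m Y <-> G *m X = Y *m G).
Proof.
move=> Gu; split => E.
  have := congr1 (fun T => G *m T *m G) E => /=.
  by rewrite -mulmxA mulmxKV // mulmxA mulmxV // mul1mx.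
have := congr1 (fun T => invmx G *m T *m invmx G) E => /=.
by rewrite mulmxA mulVmx // mul1mx -mulmxA mulmxK.
Qed.

Lemma cmxM (C : numClosedFieldType) (X Y : 'M[C]_2) : cmx (X *m Y) = cmx X *m cmx Y.
Proof. by rewrite /cmx map_mxM. Qed.

Lemma cmxV (C : numClosedFieldType) (X : 'M[C]_2) : cmx (invmx X) = invmx (cmx X).
Proof. by rewrite /cmx map_invmx. Qed.

Lemma cmx_rat (C : numClosedFieldType) (X : 'M[rat]_2) : cmx (ratmx C X) = ratmx C X.
Proof. by apply/matrixP => i j; rewrite !mxE fmorph_rat. Qed.

Lemma iota_conj (C : numClosedFieldType) (A M : 'M[C]_2) : A \in unitmx ->
  iota_mx (A *m M *m invmx A) = A *m iota_mx M *m invmx A.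
Proof.
move=> Au; rewrite /iota_mx mxtrace_mulC mulmxA mulVmx // mul1mx.
by rewrite mulmxBr mulmxBl scalar_mxC mulmxK.
Qed.

Lemma herm_conj (C : numClosedFieldType) (G1 G2 A : 'M[C]_2) (a : C) M :
  A \in unitmx -> cmx A = A -> G2 = a *: (A *m G1 *m A^T) ->
  G1 *m (cmx M)^T = iota_mx M *m G1 ->
  G2 *m (cmx (A *m M *m invmx A))^T = iota_mx (A *m M *m invmx A) *m G2.
Proof.
move=> Au cA -> E.
rewrite iota_conj // !cmxM cmxV cA !trmx_mul.
rewrite -!scalemxAl -!scalemxAr; congr (_ *: _).
have h : A^T *m (invmx A)^T = 1%:M by rewrite -trmx_mul mulVmx // trmx1.
rewrite !mulmxA -(mulmxA _ A^T) h mulmx1 -(mulmxA A G1) E.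
by rewrite !mulmxA mulmxKV.
Qed.

Lemma Imz (C : numClosedFieldType) (tau : C) (Q : 'M[int]_2) :
  map_mx (fun x : C => 'Im x) (tau *: intmx C Q) = 'Im tau *: intmx C Q.
Proof. by apply/matrixP => i j; rewrite !mxE ImMr ?realz. Qed.

Lemma Gunit (C : numClosedFieldType) (tau : C) (Q : 'M[int]_2) :
  0 < 'Im tau -> \det Q != 0 -> ('Im tau *: intmx C Q) \in unitmx.
Proof.
move=> hi hQ; rewrite unitmxE unitfE detZ /intmx det_map_mx.
by rewrite mulf_neq0 ?expf_neq0 ?intr_eq0 // gt_eqF.
Qed.

Lemma herm_z (C : numClosedFieldType) (tau : C) (Q1 Q2 : 'M[int]_2) (A : 'M[C]_2) (a : C) M :
  0 < 'Im tau -> \det Q1 != 0 -> \det Q2 != 0 -> A \in unitmx -> cmx A = A ->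
  intmx C Q2 = a *: (A *m intmx C Q1 *m A^T) ->
  (cmx M)^T *m Hmat (tau *: intmx C Q1) = Hmat (tau *: intmx C Q1) *m iota_mx M ->
  (cmx (A *m M *m invmx A))^T *m Hmat (tau *: intmx C Q2) =
     Hmat (tau *: intmx C Q2) *m iota_mx (A *m M *m invmx A).
Proof.
move=> hi h1 h2 Au cA hq; rewrite /Hmat !Imz.
move/(herm_iff _ _ _ _ (Gunit _ _ _ hi h1)) => E.
apply/(herm_iff _ _ _ _ (Gunit _ _ _ hi h2)).
apply: (herm_conj _ _ _ _ a _ Au cA _ E).
by rewrite hq -scalemxAr -scalemxAl !scalerA mulrC.
Qed.

Lemma herm_scale (C : numClosedFieldType) (H M : 'M[C]_2) (k : nat) :
  (cmx M)^T *m H = H *m iota_mx M ->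
  (cmx (k%:R *: M))^T *m H = H *m iota_mx (k%:R *: M).
Proof.
move=> E.
have -> : cmx (k%:R *: M) = k%:R *: cmx M.
  by apply/matrixP => i j; rewrite !mxE /= rmorphM /= conjC_nat.
have -> : iota_mx (k%:R *: M) = k%:R *: iota_mx M.
  by rewrite /iota_mx mxtraceZ scalerBr scale_scalar_mx.
by rewrite linearZ /= -scalemxAl E scalemxAr.
Qed.

Lemma lat_I (C : numClosedFieldType) (tau : C) (q1 q2 A : 'M[C]_2) (a : C) :
  A \in unitmx -> q2 = a^-1 *: (A *m q1 *m A^T) ->
  invmx A *m (tau *: q2) = (tau *: q1) *m (a^-1 *: A^T).
Proof.
move=> Au ->.
by rewrite -!scalemxAl -!scalemxAr !scalerA mulrC !mulmxA mulVmx // mul1mx.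
Qed.

Lemma lat_II (C : numClosedFieldType) (tau : C) (q1 q2 A : 'M[C]_2) (a : C) :
  A \in unitmx -> a != 0 -> q2 = a^-1 *: (A *m q1 *m A^T) ->
  A *m (tau *: q1) = (tau *: q2) *m (a *: (invmx A)^T).
Proof.
move=> Au a0 ->.
rewrite -!scalemxAl -!scalemxAr !scalerA mulfVK //.
by rewrite -!mulmxA -trmx_mul mulVmx // trmx1 mulmx1.
Qed.

Lemma intmxZ (R : comNzRingType) m n (k : int) (X : 'M[int]_(m, n)) :
  intmx R (k *: X) = k%:~R *: intmx R X.
Proof. by rewrite /intmx map_mxZ. Qed.

Lemma intmxT (R : comNzRingType) m n (X : 'M[int]_(m, n)) :
  intmx R X^T = (intmx R X)^T.
Proof. by apply/matrixP => i j; rewrite !mxE. Qed.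

Lemma intmx_det (R : comNzRingType) (X : 'M[int]_2) :
  \det (intmx R X) = (\det X)%:~R.
Proof. by rewrite /intmx det_map_mx. Qed.

Lemma denom2 (X Y : 'M[rat]_2) : exists d : nat, (0 < d)%N /\
  (exists Xi, d%:R *: X = intmx rat Xi) /\ (exists Yi, d%:R *: Y = intmx rat Yi).
Proof.
have [d [d0 [Xi hX]]] := denom_mx X; have [e [e0 [Yi hY]]] := denom_mx Y.
exists (d * e)%N; split; first by rewrite muln_gt0 d0.
split.
  exists (e%:Z *: Xi); rewrite intmxZ -hX scalerA -natrM mulnC; done.
exists (d%:Z *: Yi); rewrite intmxZ -hY scalerA -natrM; done.
Qed.

Lemma key_end (C : numClosedFieldType) (tau : C) (Q1 Q2 : 'M[int]_2) (A : 'M[rat]_2)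
  (c1 c2 : rat) (P1 W1 P2 W2 : 'M[int]_2) M :
  A \in unitmx ->
  intmx rat Q2 = (\det A)^-1 *: (A *m intmx rat Q1 *m A^T) ->
  c2 *: invmx A = intmx rat P2 -> c2 *: ((\det A)^-1 *: A^T) = intmx rat W2 ->
  c1 *: A = intmx rat P1 -> c1 *: (\det A *: (invmx A)^T) = intmx rat W1 ->
  EndX (tau *: intmx C Q1) M ->
  EndX (tau *: intmx C Q2) (ratr (c1 * c2) *: (ratmx C A *m M *m invmx (ratmx C A))).
Proof.
move=> Au hQ EP2 EW2 EP1 EW1 HM.
have A'u := ratmx_unit C _ Au.
have a0 : \det A != 0 by rewrite -unitfE -unitmxE.
have hr : (ratr (\det A) : C) != 0 by rewrite fmorph_eq0.
have hq : intmx C Q2 = (ratr (\det A))^-1 *: (ratmx C A *m intmx C Q1 *m (ratmx C A)^T).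
  by rewrite -!ratmx_int hQ ratmxZ !ratmxM ratmxT fmorphV.
have E2 : intmx C P2 *m (tau *: intmx C Q2) = (tau *: intmx C Q1) *m intmx C W2.
  rewrite -(ratmx_int C _ _ P2) -(ratmx_int C _ _ W2) -EP2 -EW2 !ratmxZ ratmxT ratmxV fmorphV.
  by rewrite -(scalemxAl (ratr c2 : C)) (lat_I C tau _ _ _ _ A'u hq) scalemxAr.
have E1 : intmx C P1 *m (tau *: intmx C Q1) = (tau *: intmx C Q2) *m intmx C W1.
  rewrite -(ratmx_int C _ _ P1) -(ratmx_int C _ _ W1) -EP1 -EW1 !ratmxZ ratmxT ratmxV.
  by rewrite -(scalemxAl (ratr c1 : C)) (lat_II C tau _ _ _ _ A'u hr hq) scalemxAr.
have := End_conj C _ _ _ _ _ _ M E2 E1 HM.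
rewrite -(ratmx_int C _ _ P1) -(ratmx_int C _ _ P2) -EP1 -EP2 !ratmxZ ratmxV.
by rewrite -scalemxAr -!scalemxAl scalerA rmorphM mulrC.
Qed.

Lemma fwd (C : numClosedFieldType) (tau : C) (Q1 Q2 : 'M[int]_2) (S : scal) (A : 'M[rat]_2) :
  0 < 'Im tau -> \det Q1 != 0 -> \det Q2 != 0 -> GL2 S A ->
  intmx rat Q2 = (\det A)^-1 *: (A *m intmx rat Q1 *m A^T) ->
  (forall M, EndS S (tau *: intmx C Q1) M ->
     EndS S (tau *: intmx C Q2) (ratmx C A *m M *m invmx (ratmx C A))) /\
  (forall M, RS S (tau *: intmx C Q1) M ->
     RS S (tau *: intmx C Q2) (ratmx C A *m M *m invmx (ratmx C A))).
Proof.
move=> hi h1 h2 [Au hZ] hQ.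
have A'u := ratmx_unit C _ Au.
have hq : intmx C Q2 = (ratr (\det A))^-1 *: (ratmx C A *m intmx C Q1 *m (ratmx C A)^T).
  by rewrite -!ratmx_int hQ ratmxZ !ratmxM ratmxT fmorphV.
have herm := fun M => herm_z C tau Q1 Q2 (ratmx C A) ((ratr (\det A))^-1) M hi h1 h2 A'u (cmx_rat C A) hq.
have phiZ : forall (k : nat) M, ratmx C A *m (k%:R *: M) *m invmx (ratmx C A) =
    k%:R *: (ratmx C A *m M *m invmx (ratmx C A)).
  by move=> k M; rewrite -scalemxAr -scalemxAl.
case: S hZ => [hZ|_].
  have [Ai [Bi [hA hB]]] := hZ erefl.
  have hdet : (\det A)^-1 = (\det Bi)%:~R by rewrite -det_inv hB intmx_det.
  have hdet' : \det A = (\det Ai)%:~R by rewrite hA intmx_det.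
  have kE : forall M, EndX (tau *: intmx C Q1) M ->
      EndX (tau *: intmx C Q2) (ratmx C A *m M *m invmx (ratmx C A)).
    move=> M HM.
    have := key_end C tau Q1 Q2 A 1 1 Ai ((\det Ai) *: Bi^T) Bi ((\det Bi) *: Ai^T) M Au hQ.
    rewrite mulr1 rmorph1 !scale1r; apply => //.
    - by rewrite hdet hA intmxZ intmxT.
    - by rewrite hdet' hB intmxZ intmxT.
  split=> M; first exact: kE.
  by case=> HM HH; split; [exact: kE | exact: herm].
have [d1 [d10 [[P1 EP1] [W1 EW1]]]] := denom2 A (\det A *: (invmx A)^T).
have [d2 [d20 [[P2 EP2] [W2 EW2]]]] := denom2 (invmx A) ((\det A)^-1 *: A^T).
have kE : forall M, EndX (tau *: intmx C Q1) M ->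
    EndX (tau *: intmx C Q2) ((d1 * d2)%:R *: (ratmx C A *m M *m invmx (ratmx C A))).
  move=> M HM.
  have := key_end C tau Q1 Q2 A d1%:R d2%:R P1 W1 P2 W2 M Au hQ EP2 EW2 EP1 EW1 HM.
  by rewrite -natrM ratr_nat.
split=> M [n [n0 HM]]; exists (d1 * d2 * n)%N; split; rewrite ?muln_gt0 ?d10 ?d20 //.
  by rewrite natrM -scalerA -phiZ; apply: kE.
case: HM => HM1 HM2.
rewrite natrM -scalerA -phiZ; split; first exact: kE.
by apply: herm_scale; apply: herm.
Qed.

Theorem mainTheorem9 (C : numClosedFieldType) (N : nat) (tau : C)
  (Q1 Q2 : 'M[int]_2) (S : scal) (A : 'M[rat]_2) :
  prime N -> 0 < 'Im tau ->
  posdef C Q1 -> posdef C Q2 ->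
  \det Q1 = N%:Z -> \det Q2 = N%:Z ->
  GL2 S A ->
  intmx rat Q2 = (\det A)^-1 *: (A *m intmx rat Q1 *m A^T) ->
  let z1 := tau *: intmx C Q1 in
  let z2 := tau *: intmx C Q2 in
  let phi := fun M : 'M[C]_2 => ratmx C A *m M *m invmx (ratmx C A) in
  (* S-algebra homomorphism M |-> A M A^{-1} *)
  [/\ phi 1%:M = 1%:M,
      (forall M M', phi (M + M') = phi M + phi M'),
      (forall M M', phi (M *m M') = phi M *m phi M'),
      (forall (c : rat) M, is_scalar S c -> phi (ratr c *: M) = ratr c *: phi M) &
      (forall M M', phi M = phi M' -> M = M')] /\
  (* bijection End_S(X_{Q1 tau}) -> End_S(X_{Q2 tau}) *)
  ((forall M, EndS S z1 M -> EndS S z2 (phi M)) /\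
   (forall M', EndS S z2 M' -> exists M, EndS S z1 M /\ phi M = M')) /\
  (* induced bijection R_1 ⊗ S -> R_2 ⊗ S *)
  ((forall M, RS S z1 M -> RS S z2 (phi M)) /\
   (forall M', RS S z2 M' -> exists M, RS S z1 M /\ phi M = M')).
Proof.
move=> pN hi _ _ d1 d2 hGL hQ z1 z2 phi; subst z1 z2 phi.
have Np : N%:Z != 0 by rewrite eqz_nat -lt0n prime_gt0.
have h1 : \det Q1 != 0 by rewrite d1.
have h2 : \det Q2 != 0 by rewrite d2.
have Au : A \in unitmx by case: hGL.
have A'u := ratmx_unit C _ Au.
have a0 : \det A != 0 by rewrite -unitfE -unitmxE.
have hGL' : GL2 S (invmx A).
  split; first by rewrite unitmx_inv.
  move=> hS; case: hGL => _ /(_ hS) [Ai [Bi [hA hB]]].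
  by exists Bi, Ai; rewrite invmxK.
have hQ' : intmx rat Q1 = (\det (invmx A))^-1 *: (invmx A *m intmx rat Q2 *m (invmx A)^T).
  rewrite hQ det_inv invrK -scalemxAr -scalemxAl scalerA mulfV // scale1r.
  rewrite !mulmxA mulVmx // mul1mx -mulmxA -trmx_mul mulVmx // trmx1 mulmx1.
  done.
have [fE fR] := fwd C tau Q1 Q2 S A hi h1 h2 hGL hQ.
have [bE bR] := fwd C tau Q2 Q1 S (invmx A) hi h2 h1 hGL' hQ'.
rewrite ratmxV invmxK in bE bR.
have inv : forall M', ratmx C A *m (invmx (ratmx C A) *m M' *m ratmx C A) *m
    invmx (ratmx C A) = M'.
  by move=> M'; rewrite !mulmxA mulmxV // mul1mx mulmxK.
split.
  split.
  - by rewrite mulmx1 mulmxV.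
  - by move=> M M'; rewrite mulmxDr mulmxDl.
  - by move=> M M'; rewrite !mulmxA mulmxKV.
  - by move=> c M _; rewrite -scalemxAr -scalemxAl.
  - move=> M M' E.
    have := congr1 (fun X => invmx (ratmx C A) *m X *m ratmx C A) E.
    by rewrite /= !mulmxA !mulVmx // !mul1mx !mulmxKV.
split; split => //.
  by move=> M' /bE H; exists (invmx (ratmx C A) *m M' *m ratmx C A).
by move=> M' /bR H; exists (invmx (ratmx C A) *m M' *m ratmx C A).
Qed.
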